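(* For every $n>0$ and every set $U$ with $\mathbb R^n_{\mathrm{rect}}\subseteq U\subseteq\mathbb R^n_{\mathrm{reg}}$, the region structure $\mathfrak R(\mathbb R^n,U)$ is domino ready.
   Context: $\mathbb R^n$ has the Euclidean topology with interior $\mathbb I$; $\mathbb R^n_{\mathrm{reg}}$ is the set of non-empty regular closed subsets ($\mathbb C\mathbb I(s)=s$); $\mathbb R^n_{\mathrm{rect}}$ the set of products $\prod_{i=1}^nC_i$ of non-singleton closed intervals. $\mathfrak R(\mathbb R^n,U)$ has domain $U$ and relations $\mathrm{tpp}(s,t)$ iff $s\subseteq t$, $s\not\subseteq\mathbb I(t)$, $s\ne t$, and $\mathrm{ntpp}(s,t)$ iff $s\subseteq\mathbb I(t)$, $s\ne t$ (plus the other RCC8 relations). Let $\lambda$ be the enumeration of $\mathbb N\times\mathbb N$ along anti-diagonals from floor to wall: $\lambda(k(k+1)/2+m+1)=(k-m,m)$ for $k\ge0$, $0\le m\le k$ (so $\lambda(1)=(0,0)$, $\lambda(2)=(1,0)$, $\lambda(3)=(0,1)$, $\lambda(4)=(2,0)$, ...). A region structure with domain $W$ is domino ready if $W$ contains sequences $x_1,x_2,\dots$ and $y_1,y_2,\dots$ such that for all $i,j\ge1$: (1) $x_i\,\mathrm{tpp}\,x_{i+1}$; (2) $x_i\,\mathrm{ntpp}\,x_j$ if $j>i+1$; (3) $x_{2i-1}\,\mathrm{tpp}\,y_i$; (4) $y_i\,\mathrm{tpp}\,x_{2j-1}$ iff $\lambda(j)$ is reached from $\lambda(i)$ by one step to the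 right (first coordinate $+1$); (5) $y_i\,\mathrm{ntpp}\,y_j$ if $j>i$. *)

(* Defs.v *)
From HB Require Import structures.
From mathcomp Require Import all_boot all_order all_algebra.
From mathcomp Require Import all_classical all_reals topology normedtype.
From mathcomp Require Import Rstruct Rstruct_topology.
Set Implicit Arguments. Unset Strict Implicit. Unset Printing Implicit Defensive.
Import Order.TTheory GRing.Theory Num.Theory.
Local Open Scope classical_set_scope.
Local Open Scope ring_scope.

Notation Rn n := ('rV[Rdefinitions.R]_n).

Definition reg_closed (n : nat) (s : set (Rn n)) : Prop :=
  s !=set0 /\ closure (interior s) = s.

Definition rect (n : nat) (s : set (Rn n)) : Prop :=
  exists a b : 'I_n -> Rdefinitions.R,
    (forall i, a i < b i) /\ s = [set x | forall i, a i <= x ord0 i <= b i].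

Definition tpp (n : nat) (s t : set (Rn n)) : Prop :=
  s `<=` t /\ ~ (s `<=` interior t) /\ s <> t.

Definition ntpp (n : nat) (s t : set (Rn n)) : Prop :=
  s `<=` interior t /\ s <> t.

Definition lambda_is (j : nat) (p : nat * nat) : Prop :=
  exists k m : nat, (m <= k)%N /\ j = ((k * k.+1) %/ 2 + m + 1)%N /\ p = ((k - m)%N, m).

Definition right_step (i j : nat) : Prop :=
  exists a b : nat, lambda_is i (a, b) /\ lambda_is j (a.+1, b).

(* A region structure with domain W (and relations tpp, ntpp) is domino ready.
   Sequences are indexed from 1 (values at index 0 are irrelevant). *)
Definition domino_ready (T : Type) (W : set T) (tppR ntppR : T -> T -> Prop) : Prop :=
  exists x y : nat -> T,
    (forall i, (1 <= i)%N -> W (x i) /\ W (y i)) /\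
    (forall i, (1 <= i)%N -> tppR (x i) (x i.+1)) /\
    (forall i j, (1 <= i)%N -> (j > i.+1)%N -> ntppR (x i) (x j)) /\
    (forall i, (1 <= i)%N -> tppR (x (2 * i - 1)%N) (y i)) /\
    (forall i j, (1 <= i)%N -> (1 <= j)%N ->
       (tppR (y i) (x (2 * j - 1)%N) <-> right_step i j)) /\
    (forall i j, (1 <= i)%N -> (j > i)%N -> ntppR (y i) (y j)).

Arguments reg_closed n s : clear implicits.
Arguments rect n s : clear implicits.
Arguments tpp n s t : clear implicits.
Arguments ntpp n s t : clear implicits.

(* Main.v *)
Require Import Defs.
From mathcomp Require Import all_boot all_order all_algebra.
From mathcomp Require Import all_classical all_reals topology normedtype.
From mathcomp Require Import Rstruct Rstruct_topology.
From mathcomp Require Import lra zify.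
Import Order.TTheory GRing.Theory Num.Theory.
Local Open Scope classical_set_scope.

Definition Tn k := (k * k.+1 %/ 2)%N.
Lemma TS k : Tn k.+1 = (Tn k + k.+1)%N.
Proof. rewrite /Tn. lia. Qed.
Lemma Tmono k d : (Tn k <= Tn (k + d))%N.
Proof. elim: d => [|d IH]; first by rewrite addn0. rewrite addnS TS. lia. Qed.
Lemma Tuniq k m k' m' : (m <= k)%N -> (m' <= k')%N -> Tn k + m = Tn k' + m' ->
  k = k' /\ m = m'.
Proof.
move=> hm hm' E.
have H : forall k k' m m', (m <= k)%N -> (k < k')%N -> (Tn k + m < Tn k' + m')%N.
  move=> a a' b b' hb lt. have := Tmono a.+1 (a' - a.+1). rewrite TS.
  have -> : (a.+1 + (a' - a.+1) = a')%N by lia. lia.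
case: (ltngtP k k') => h.
- have := H _ _ _ m' hm h. lia.
- have := H _ _ _ m hm' h. lia.
- subst. lia.
Qed.

Fixpoint q (i : nat) : nat * nat :=
  match i with
  | 0 => (0, 0)%N
  | i'.+1 => let: (k, m) := q i' in if (m < k)%N then (k, m.+1) else (k.+1, 0%N)
  end.
Lemma qP i : ((q i).2 <= (q i).1)%N /\ i = (Tn (q i).1 + (q i).2)%N.
Proof.
elim: i => [|i [h1 h2]] /=; first by rewrite /Tn.
case: (q i) h1 h2 => k m /= h1 h2. case: ifP => /= h.
  lia.
rewrite TS. lia.
Qed.
Lemma qmono i : ((q i).1 <= (q i.+1).1)%N.
Proof. rewrite /=. case: (q i) => k m /=. case: ifP => //= _. Qed.

Definition cc (i : nat) := (i + (q i.-1).1 + 1)%N.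
Lemma cc_gt i : (i < cc i)%N.
Proof. rewrite /cc. lia. Qed.
Lemma cc_S i : (1 <= i)%N -> (cc i < cc i.+1)%N.
Proof. case: i => // i _. rewrite /cc. have := qmono i. rewrite -/(q i.+1). simpl predn. lia. Qed.
Lemma cc_mono i j : (1 <= i)%N -> (i < j)%N -> (cc i < cc j)%N.
Proof.
move=> hi; elim: j => // j IH hj.
case: (ltngtP i j) => h.
- have := IH h. have := @cc_S j. lia.
- lia.
- subst. exact: cc_S.
Qed.

Lemma right_stepP i j : (1 <= i)%N -> right_step i j <-> j = cc i.
Proof.
move=> hi; have [h1 h2] := qP i.-1. split.
- move=> [a [b [[k [m [hm [ei Eab]]]] [k' [m' [hm' [ej Eab']]]]]]].
  rewrite -/(Tn k) in ei; rewrite -/(Tn k') in ej. case: Eab => ea eb. case: Eab' => ea' eb'. subst a b.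
  have [E1 E2] : k = (q i.-1).1 /\ m = (q i.-1).2.
    apply: Tuniq => //. lia.
  have ek : k' = k.+1 by lia.
  subst k' m'. rewrite /cc -E1 ej TS. lia.
- move=> ->. exists ((q i.-1).1 - (q i.-1).2)%N, (q i.-1).2. split.
  + exists (q i.-1).1, (q i.-1).2. split => //. split => //.
    rewrite -/(Tn _). lia.
  + exists (q i.-1).1.+1, (q i.-1).2. split; first lia. split.
    * rewrite -/(Tn _) /cc TS. lia.
    * congr pair. lia.
Qed.
Local Open Scope ring_scope.

Section Topo.
Variable n : nat.
Hypothesis hn : (0 < n)%N.
Let i0 : 'I_n := Ordinal hn.
Notation RR := Rdefinitions.R.

Definition Qr (a b : RR) : set (Rn n) := [set x | forall i, a <= x ord0 i <= b].

Lemma const_in (a b v : RR) : a <= v <= b -> Qr a b (const_mx v).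
Proof. by move=> h i; rewrite mxE. Qed.

Lemma in_int (a b c d : RR) : c < a -> b < d -> Qr a b `<=` interior (Qr c d).
Proof.
move=> hca hbd x Hx; rewrite /interior /=. apply/nbhs_ballP.
have [e [e0 [ea eb]]] : exists e : RR, 0 < e /\ e <= a - c /\ e <= d - b.
  case: (lerP (a - c) (d - b)) => h; [exists (a - c) | exists (d - b)];
    split; lra.
exists e => //.
move=> y [_ H] i. have := H ord0 i. rewrite /ball /= ltr_distlC.
have := Hx i. move=> /andP[h1 h2] /andP[h3 h4].
apply/andP; split; lra.
Qed.

Lemma not_int_lo (c d : RR) : ~ interior (Qr c d) (const_mx c).
Proof.
move=> /nbhs_ballP [e /= e0 H].
have hb : ball (const_mx (if true then c else c) : Rn n) e (const_mx (c - e / 2)).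
  split => // i j; rewrite !mxE /ball /= ltr_distlC. apply/andP; split; lra.
move: (H _ hb) => /(_ i0). rewrite mxE => /andP[h _]. lra.
Qed.

Lemma not_int_hi (c d : RR) : ~ interior (Qr c d) (const_mx d).
Proof.
move=> /nbhs_ballP [e /= e0 H].
have hb : ball (const_mx (if true then d else c) : Rn n) e (const_mx (d + e / 2)).
  split => // i j; rewrite !mxE /ball /= ltr_distlC. apply/andP; split; lra.
move: (H _ hb) => /(_ i0). rewrite mxE => /andP[_ h]. lra.
Qed.

Definition Qn (l r : nat) := Qr (- (l%:R)) (r%:R).

Lemma constQ l r (v : RR) : - (l%:R) <= v <= r%:R -> Qn l r (const_mx v).
Proof. exact: const_in. Qed.

Lemma natle (a b : nat) : ((a%:R : RR) <= b%:R) -> (a <= b)%N.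
Proof. by rewrite ler_nat. Qed.
Lemma natlt (a b : nat) : (a < b)%N -> ((a%:R : RR) < b%:R).
Proof. by rewrite ltr_nat. Qed.
Lemma natle' (a b : nat) : (a <= b)%N -> ((a%:R : RR) <= b%:R).
Proof. by rewrite ler_nat. Qed.

Lemma Qn_sub l r l' r' : (l <= l')%N -> (r <= r')%N -> Qn l r `<=` Qn l' r'.
Proof.
move=> /natle' h1 /natle' h2 x Hx i. have /andP[h3 h4] := Hx i.
apply/andP; split; lra.
Qed.

Lemma Qn_neq l r l' r' : (l < l' \/ r < r')%N -> Qn l r <> Qn l' r'.
Proof.
case=> [/natlt h|/natlt h] E.
- have : Qn l' r' (const_mx (- l'%:R)).
    apply: constQ; apply/andP; split; first lra.
    have ? := ler0n RR r'; have ? := ler0n RR l'; lra.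
  rewrite -E => /(_ i0); rewrite mxE => /andP[h' _]. lra.
- have : Qn l' r' (const_mx (r'%:R)).
    apply: constQ; apply/andP; split; last lra.
    have ? := ler0n RR r'; have ? := ler0n RR l'; lra.
  rewrite -E => /(_ i0); rewrite mxE => /andP[_ h']. lra.
Qed.

Lemma tppQ l r l' r' : (l <= l')%N -> (r <= r')%N -> (l = l' \/ r = r') ->
  (l < l' \/ r < r')%N -> tpp n (Qn l r) (Qn l' r').
Proof.
move=> h1 h2 h3 h4; split; first exact: Qn_sub.
split; last exact: Qn_neq.
case: h3 => <- Hs.
- apply: (@not_int_lo (- l%:R) r'%:R). apply: Hs. apply: constQ.
  have := ler0n RR l; have := ler0n RR r. move=> *; apply/andP; split; lra.
- apply: (@not_int_hi (- l'%:R) r%:R). apply: Hs. apply: constQ.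
  have := ler0n RR l; have := ler0n RR r. move=> *; apply/andP; split; lra.
Qed.

Lemma ntppQ l r l' r' : (l < l')%N -> (r < r')%N -> ntpp n (Qn l r) (Qn l' r').
Proof.
move=> h1 h2; split; last by apply: Qn_neq; left.
apply: in_int.
- have := @natlt _ _ h1. lra.
- exact: natlt.
Qed.

Lemma tppQ_inv l r l' r' : tpp n (Qn l r) (Qn l' r') ->
  [/\ (l <= l')%N, (r <= r')%N, (l = l' \/ r = r') & (l < l' \/ r < r')%N].
Proof.
move=> [Hs [Hi Hne]].
have hl : (l <= l')%N.
  have : Qn l r (const_mx (- l%:R)).
    apply: constQ; have := ler0n RR l; have := ler0n RR r.
    move=> *; apply/andP; split; lra.
  move=> /Hs /(_ i0); rewrite mxE => /andP[h _]. apply: natle. lra.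
have hr : (r <= r')%N.
  have : Qn l r (const_mx (r%:R)).
    apply: constQ; have := ler0n RR l; have := ler0n RR r.
    move=> *; apply/andP; split; lra.
  move=> /Hs /(_ i0); rewrite mxE => /andP[_ h]. apply: natle. lra.
have n1 : ~ ((l < l')%N /\ (r < r')%N).
  move=> [a b]. apply: Hi. apply: in_int.
  - have := @natlt _ _ a. lra.
  - exact: natlt.
have n2 : ~ (l = l' /\ r = r') by move=> [a b]; apply: Hne; rewrite a b.
split => //; lia.
Qed.

Lemma rectQ l r : (0 < l + r)%N -> rect n (Qn l r).
Proof.
move=> h. exists (fun _ => - l%:R), (fun _ => r%:R). split => //.
move=> _. have := ler0n RR l; have := ler0n RR r.
have : (0 : RR) < (l + r)%:R by rewrite ltr0n. rewrite natrD. lra.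
Qed.
End Topo.
Local Close Scope ring_scope.

Theorem lemma5p8 (n : nat) (U : set (set (Rn n))) :
  (0 < n)%N ->
  rect n `<=` U -> U `<=` reg_closed n ->
  domino_ready U (tpp n) (ntpp n).
Proof.
move=> hn hU _.
exists (fun i => Qn n (i.+1 %/ 2) ((i %/ 2).+1)), (fun i => Qn n i (cc i)).
split; [|split; [|split; [|split; [|split]]]].
- move=> i hi; split; apply: hU; apply: rectQ; lia.
- move=> i hi; apply: tppQ => //; lia.
- move=> i j hi hj; apply: ntppQ => //; lia.
- move=> i hi; have := cc_gt i => h; apply: tppQ => //; lia.
- move=> i j hi hj; rewrite right_stepP //; have := cc_gt i => h; split.
  + move=> /tppQ_inv [] //; lia.
  + move=> ->; apply: tppQ => //; lia.
- move=> i j hi hj; have := @cc_mono _ _ hi hj => h; apply: ntppQ => //; lia.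
Qed.
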